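(* Let $\mathbb{A}$, its multiplication, the decomposition $A_3=C\oplus L$ and the complex $\mathbb{B}=\mathbb{B}(\mathbb{A},C)$ be as in the context, and suppose moreover that $\mathbb{A}$ is split exact (i.e. exact including at $A_0$, so $I=R$). Then $\mathbb{B}$ is split exact.
   Context: Let $R$ be a commutative Noetherian ring and let $p\ge 1$, $q\ge 3$ be integers. Let $\mathbb{A}\colon 0\to A_3\xrightarrow{d_3}A_2\xrightarrow{d_2}A_1\xrightarrow{d_1}A_0=R$ be a complex of finitely generated free $R$-modules with $\operatorname{rank}A_1=p+2$, $\operatorname{rank}A_2=p+q$, $\operatorname{rank}A_3=q-1$. Fix a differential graded algebra structure on $\mathbb{A}$: $R$-bilinear products $A_1\times A_1\to A_2$ (alternating: $e\cdot e=0$, $e\cdot e'=-e'\cdot e$) and $A_1\times A_2\to A_3$ satisfying the Leibniz rules $d_2(e\cdot e')=d_1(e)e'-d_1(e')e$ and $d_3(e\cdot f)=d_1(e)f+d_2(f)\cdot e$ for $e,e'\in A_1$, $f\in A_2$. Fix a decomposition $A_3=C\oplus L$ with $C$ free of rank $q-2$ and $L$ free of rank $1$; let $\eta\colon A_3\to L$ be the projection and $\iota\colon C\to A_3$ the inclusion. Define the sequence $\mathbb{B}=\mathbb{B}(\mathbb{A},C)\colon 0\to C\xrightarrow{\delta_4}A_2\xrightarrow{\delta_3}\operatorname{Hom}(A_1,L)\oplus A_1\xrightarrow{\delta_2}\operatorname{Hom}(A_2,L)\xrightarrow{\delta_1}\operatorname{Hom}(C,L)$ by $\delta_4=d_3\circ\iota$;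 $\delta_3(f)=\big(e\mapsto \eta(e\cdot f),\ d_2(f)\big)$; $\delta_2(\varphi,e)=\big(f\mapsto \varphi(d_2f)+\eta(e\cdot f)\big)$; $\delta_1(\psi)=\psi\circ d_3\circ\iota$. *)

(* Defs.v *)
From HB Require Import structures.
From mathcomp Require Import all_boot all_order all_algebra.
Set Implicit Arguments. Unset Strict Implicit. Unset Printing Implicit Defensive.
Import GRing.Theory.
Local Open Scope ring_scope.

Definition noetherian (R : comPzRingType) : Prop :=
  forall I : R -> Prop,
    I 0 -> (forall x y, I x -> I y -> I (x + y)) -> (forall r x, I x -> I (r * x)) ->
    exists n (g : 'I_n -> R), (forall i, I (g i)) /\
      (forall x, I x -> exists c : 'I_n -> R, x = \sum_(i < n) c i * g i).

Definition islin (R : pzRingType) (U V : lmodType R) (f : U -> V) : Prop :=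
  forall (a : R) (x y : U), f (a *: x + y) = a *: f x + f y.

Definition isbilin (R : pzRingType) (U V W : lmodType R) (m : U -> V -> W) : Prop :=
  (forall y, islin (fun x => m x y)) /\ (forall x, islin (m x)).

(* Free modules of rank n are modeled as row vectors 'rV[R]_n; an R-linear
   map A_n -> A_m is a matrix M : 'M_(n,m) acting by x |-> x *m M.
   L is free of rank one, modeled as 'rV[R]_1 (= R); Hom(A_n, L) is modeled
   as 'M[R]_(n,1), a homomorphism phi acting by x |-> x *m phi. *)
Definition app (R : pzRingType) n (phi : 'M[R]_(n, 1)) (x : 'rV[R]_n) : 'rV[R]_1 :=
  x *m phi.

Definition homOf (R : pzRingType) n (f : 'rV[R]_n -> 'rV[R]_1) : 'M[R]_(n, 1) :=
  \matrix_(i < n, j < 1) f (delta_mx 0 i) 0 j.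

(* Split exact complex 0 -> M3 -> M2 -> M1 -> M0 -> 0 : a complex with a
   (linear) contracting homotopy. *)
Definition split_exact4 (R : pzRingType) (M3 M2 M1 M0 : lmodType R)
  (f3 : M3 -> M2) (f2 : M2 -> M1) (f1 : M1 -> M0) : Prop :=
  [/\ islin f3, islin f2, islin f1,
      (forall x, f2 (f3 x) = 0) /\ (forall x, f1 (f2 x) = 0) &
  exists (s0 : M0 -> M1) (s1 : M1 -> M2) (s2 : M2 -> M3),
    [/\ islin s0 /\ islin s1 /\ islin s2,
        (forall x, s2 (f3 x) = x),
        (forall x, f3 (s2 x) + s1 (f2 x) = x),
        (forall x, f2 (s1 x) + s0 (f1 x) = x) &
        (forall x, f1 (s0 x) = x)]].

Definition split_exact5 (R : pzRingType) (M4 M3 M2 M1 M0 : lmodType R)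
  (f4 : M4 -> M3) (f3 : M3 -> M2) (f2 : M2 -> M1) (f1 : M1 -> M0) : Prop :=
  [/\ islin f4 /\ islin f3 /\ islin f2 /\ islin f1,
      (forall x, f3 (f4 x) = 0), (forall x, f2 (f3 x) = 0), (forall x, f1 (f2 x) = 0) &
  exists (s0 : M0 -> M1) (s1 : M1 -> M2) (s2 : M2 -> M3) (s3 : M3 -> M4),
    [/\ islin s0 /\ islin s1 /\ islin s2 /\ islin s3,
        (forall x, s3 (f4 x) = x) /\ (forall x, f4 (s3 x) + s2 (f3 x) = x),
        (forall x, f3 (s2 x) + s1 (f2 x) = x),
        (forall x, f2 (s1 x) + s0 (f1 x) = x) &
        (forall x, f1 (s0 x) = x)]].

(* The maps of B(A, C).  Here eta : 'M_(q-1,1) is the projection A3 -> L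
   and iota : 'M_(q-2,q-1) the inclusion C -> A3. *)
Section BDef.
Variables (R : comPzRingType) (n1 n2 n3 nC : nat).
Variables (d3 : 'M[R]_(n3, n2)) (d2 : 'M[R]_(n2, n1)).
Variable (mul12 : 'rV[R]_n1 -> 'rV[R]_n2 -> 'rV[R]_n3).
Variables (iota : 'M[R]_(nC, n3)) (eta : 'M[R]_(n3, 1)).

Definition delta4 (c : 'rV[R]_nC) : 'rV[R]_n2 := c *m iota *m d3.

Definition delta3 (f : 'rV[R]_n2) : 'M[R]_(n1, 1) * 'rV[R]_n1 :=
  (homOf (fun e => mul12 e f *m eta), f *m d2).

Definition delta2 (pe : 'M[R]_(n1, 1) * 'rV[R]_n1) : 'M[R]_(n2, 1) :=
  homOf (fun f => app pe.1 (f *m d2) + mul12 pe.2 f *m eta).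

Definition delta1 (psi : 'M[R]_(n2, 1)) : 'M[R]_(nC, 1) :=
  homOf (fun c => app psi (c *m iota *m d3)).
End BDef.

(* Main.v *)
Require Import Defs.
From HB Require Import structures.
From mathcomp Require Import all_boot all_order all_algebra.
From mathcomp Require Import ring.
Set Implicit Arguments. Unset Strict Implicit.
Import GRing.Theory.
Local Open Scope ring_scope.

Lemma islin0 (R : pzRingType) (U V : lmodType R) (f : U -> V) : islin f -> f 0 = 0.
Proof. move=> H; have := H (-1) 0 0; rewrite scaler0 add0r scaleN1r addNr; done. Qed.

Lemma islinD (R : pzRingType) (U V : lmodType R) (f : U -> V) : islin f ->
  forall x y, f (x + y) = f x + f y.
Proof. move=> H x y; have := H 1 x y; rewrite !scale1r; done. Qed.

Lemma islinZ (R : pzRingType) (U V : lmodType R) (f : U -> V) : islin f ->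
  forall a x, f (a *: x) = a *: f x.
Proof. move=> H a x; have := H a x 0; rewrite !addr0 (islin0 H) addr0; done. Qed.

Lemma islinB (R : pzRingType) (U V : lmodType R) (f : U -> V) : islin f ->
  forall x y, f (x - y) = f x - f y.
Proof. move=> H x y; have := H (-1) y x; rewrite !scaleN1r addrC => ->; by rewrite addrC. Qed.

Lemma app_homOf (R : comPzRingType) n (f : 'rV[R]_n -> 'rV[R]_1) : islin f ->
  forall x, x *m homOf f = f x.
Proof.
move=> H x; rewrite {2}(row_sum_delta x).
have -> : f (\sum_j x 0 j *: delta_mx 0 j) = \sum_j x 0 j *: f (delta_mx 0 j).
  rewrite (big_morph f (islinD H) (islin0 H)); apply eq_bigr => j _; exact: islinZ.
apply/matrixP => i k; rewrite (ord1 i) (ord1 k) !mxE summxE; apply eq_bigr => j _.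
by rewrite !mxE.
Qed.

Lemma homP (R : pzRingType) n (A B : 'M[R]_(n,1)) : (forall x : 'rV[R]_n, x *m A = x *m B) -> A = B.
Proof. move=> H; apply/row_matrixP => i; rewrite !rowE; exact: H. Qed.

Lemma homOf_ext (R : pzRingType) n (f g : 'rV[R]_n -> 'rV[R]_1) :
  (forall x, f x = g x) -> homOf f = homOf g.
Proof. by move=> H; apply/matrixP=> i j; rewrite !mxE H. Qed.

Lemma homOf0 (R : pzRingType) n (f : 'rV[R]_n -> 'rV[R]_1) :
  (forall x, f x = 0) -> homOf f = 0.
Proof. by move=> H; apply/matrixP=> i j; rewrite !mxE H mxE. Qed.

Lemma homOf_lin (R : pzRingType) (U : lmodType R) n (F : U -> 'rV[R]_n -> 'rV[R]_1) :
  (forall y a x z, F (a *: x + z) y = a *: F x y + F z y) -> islin (fun x => homOf (F x)).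
Proof. by move=> H a x z; apply/matrixP => i j; rewrite !mxE H !mxE. Qed.

Lemma mx11l (R : comPzRingType) n (a : 'M[R]_1) (M : 'M[R]_(1,n)) : a *m M = a 0 0 *: M.
Proof. by apply/matrixP => i j; rewrite (ord1 i) !mxE big_ord1. Qed.

Lemma mx11C (R : comPzRingType) (a b : 'M[R]_1) : a *m b = b *m a.
Proof. by apply/matrixP => i j; rewrite (ord1 i) (ord1 j) !mxE !big_ord1 mulrC. Qed.

Theorem mainTheorem3 (R : comPzRingType) (p q : nat)
  (d3 : 'M[R]_(q - 1, p + q)) (d2 : 'M[R]_(p + q, p.+2)) (d1 : 'M[R]_(p.+2, 1))
  (mul11 : 'rV[R]_(p.+2) -> 'rV[R]_(p.+2) -> 'rV[R]_(p + q))
  (mul12 : 'rV[R]_(p.+2) -> 'rV[R]_(p + q) -> 'rV[R]_(q - 1))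
  (iota : 'M[R]_(q - 2, q - 1)) (jL : 'M[R]_(1, q - 1))
  (piC : 'M[R]_(q - 1, q - 2)) (eta : 'M[R]_(q - 1, 1)) :
  noetherian R -> (1 <= p)%N -> (3 <= q)%N ->
  d3 *m d2 = 0 -> d2 *m d1 = 0 ->
  isbilin mul11 -> isbilin mul12 ->
  (forall e, mul11 e e = 0) -> (forall e e', mul11 e e' = - mul11 e' e) ->
  (forall e e', mul11 e e' *m d2 = (e *m d1) 0 0 *: e' - (e' *m d1) 0 0 *: e) ->
  (forall e f, mul12 e f *m d3 = (e *m d1) 0 0 *: f + mul11 (f *m d2) e) ->
  iota *m piC = 1%:M -> jL *m eta = 1%:M -> iota *m eta = 0 -> jL *m piC = 0 ->
  piC *m iota + eta *m jL = 1%:M ->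
  split_exact4 (fun x : 'rV[R]_(q - 1) => x *m d3)
               (fun x : 'rV[R]_(p + q) => x *m d2)
               (fun x : 'rV[R]_(p.+2) => x *m d1) ->
  split_exact5 (delta4 d3 iota) (delta3 d2 mul12 eta)
               (delta2 d2 mul12 eta) (delta1 d3 iota).
Proof.
move=> _ _ _ d32 d21 [H11l H11r] [H12l H12r] m11aa m11anti L11 L12 ip je ie jp dec
  [_ _ _ _ [s0 [s1 [s2 [[ls0 [ls1 ls2]] s2d3 hom2 hom1 hom0]]]]].
set u := s0 1.
have hu1 : (u *m d1) 0 0 = 1 by rewrite hom0 !mxE.
have d3inj : forall x y : 'rV_(q-1), x *m d3 = y *m d3 -> x = y.
  by move=> x y E; rewrite -(s2d3 x) -(s2d3 y) E.
have m11_0l : forall e, mul11 0 e = 0 by move=> e; exact: islin0 (H11l e).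
have m12_0r : forall e, mul12 e 0 = 0 by move=> e; exact: islin0 (H12r e).
have F1 : forall e x, mul12 e (x *m d3) = (e *m d1) 0 0 *: x.
  move=> e x; apply: d3inj; rewrite L12 -mulmxA d32 mulmx0 m11_0l addr0.
  by rewrite scalemxAl.
have F2 : forall e, mul11 u e *m d2 = e - (e *m d1) 0 0 *: u.
  by move=> e; rewrite L11 hu1 scale1r.
have F3 : forall f, mul12 u f *m d3 + mul11 u (f *m d2) = f.
  by move=> f; rewrite L12 hu1 scale1r (m11anti (f *m d2) u) addrNK.
have F4 : forall e e', mul12 e (mul11 u e') + mul12 e' (mul11 u e) = 0.
  move=> e e'; apply: d3inj; rewrite mulmxDl !L12 !F2 mul0mx.
  rewrite !(islinB (H11l _)) !(islinZ (H11l _)) (m11anti e e').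
  by apply/matrixP=> i j; rewrite !mxE; ring.
have F5 : forall g f, mul12 (g *m d2) f + mul12 (f *m d2) g = 0.
  move=> g f; apply: d3inj; rewrite mulmxDl !L12 -!mulmxA d21 !mulmx0 mul0mx.
  rewrite (m11anti (g *m d2)).
  by apply/matrixP=> i j; rewrite !mxE; ring.
have wd2 : jL *m d3 *m d2 = 0 by rewrite -mulmxA d32 mulmx0.
have dec' : forall x : 'rV_(q-1), x *m piC *m iota + x *m eta *m jL = x.
  by move=> x; rewrite -!mulmxA -mulmxDr dec mulmx1.
have linA : forall m n (M : 'M[R]_(m,n)), islin (fun x : 'rV_m => x *m M).
  by move=> m n M a x y; rewrite mulmxDl scalemxAl.
have linf1 : forall f, islin (fun e => mul12 e f *m eta).
  by move=> f a x y; rewrite (H12l f) mulmxDl scalemxAl.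
have linf2 : forall (ph : 'M_(p.+2,1)) e, islin (fun g => app ph (g *m d2) + mul12 e g *m eta).
  move=> ph e a x y; rewrite /app (H12r e) !mulmxDl -!scalemxAl.
  by apply/matrixP=> i j; rewrite !mxE; ring.
have linT0 : forall (chi : 'M_(q-2,1)), islin (fun f => mul12 u f *m piC *m chi).
  by move=> chi a x y; rewrite (H12r u) !mulmxDl !scalemxAl.
have linT1 : forall (psi : 'M_(p+q,1)), islin (fun e => mul11 u e *m psi).
  by move=> psi a x y; rewrite (H11r u) !mulmxDl !scalemxAl.
have linD1 : forall (psi : 'M_(p+q,1)), islin (fun c : 'rV_(q-2) => app psi (c *m iota *m d3)).
  by move=> psi a x y; rewrite /app !mulmxDl !scalemxAl.
have pairD : forall (a b : 'M[R]_(p.+2,1) * 'rV[R]_(p.+2)), a + b = (a.1 + b.1, a.2 + b.2).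
  by [].
split.
- split; [|split; [|split]].
  + by move=> a x y; rewrite /delta4 !mulmxDl !scalemxAl.
  + move=> a x y; rewrite /delta3.
    have := homOf_lin (F := fun x e => mul12 e x *m eta) _ a x y.
    move=> ->; last by move=> e b z w; rewrite (H12r e) mulmxDl scalemxAl.
    by rewrite mulmxDl -scalemxAl.
  + move=> a x y; rewrite /delta2.
    apply: (homOf_lin (F := fun pe f => app pe.1 (f *m d2) + mul12 pe.2 f *m eta)).
    move=> f b z w /=; rewrite /app (H12l f) !mulmxDl mulmxDr -!scalemxAl.
    by rewrite scalerDr !addrA (scalemxAr b (f *m d2) z.1) (addrAC _ (f *m d2 *m w.1)).
  + move=> a x y; rewrite /delta1.
    apply: (homOf_lin (F := fun psi c => app psi (c *m iota *m d3))).
    by move=> f b z w /=; rewrite /app mulmxDr scalemxAr.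
- move=> c; rewrite /delta3 /delta4 -(mulmxA _ d3) d32 mulmx0 homOf0 //.
  by move=> e; rewrite F1 -scalemxAl -mulmxA ie mulmx0 scaler0.
- move=> f; rewrite /delta2 /delta3 /=; apply: homOf0 => g.
  by rewrite /app (app_homOf (linf1 f)) -mulmxDl F5 mul0mx.
- move=> pe; rewrite /delta1 /delta2; apply: homOf0 => c.
  rewrite /app (app_homOf (linf2 _ _)) /app -(mulmxA _ d3 d2) d32 mulmx0 mul0mx add0r.
  by rewrite F1 -scalemxAl -mulmxA ie mulmx0 scaler0.
- exists (fun chi => homOf (fun f => mul12 u f *m piC *m chi)).
  exists (fun psi => (homOf (fun e => mul11 u e *m psi), jL *m d3 *m psi *m u)).
  exists (fun pe => mul11 u pe.2 + u *m pe.1 *m (jL *m d3)).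
  exists (fun f => mul12 u f *m piC).
  split.
  + split; [|split; [|split]].
    * apply: (homOf_lin (F := fun chi f => mul12 u f *m piC *m chi)).
      by move=> f b z w; rewrite mulmxDr scalemxAr.
    * move=> a x y.
      have := homOf_lin (F := fun psi e => mul11 u e *m psi) _ a x y.
      move=> ->; last by move=> e b z w; rewrite mulmxDr scalemxAr.
      by rewrite !mulmxDr !mulmxDl -scalemxAr -scalemxAl.
    * move=> a [x1 x2] [y1 y2] /=.
      rewrite (H11r u) !mulmxDr !mulmxDl -scalemxAr -scalemxAl scalerDr !addrA.
      by rewrite (addrAC (a *: mul11 u x2) (mul11 u y2)).
    * by move=> a x y; rewrite (H12r u) mulmxDl scalemxAl.
  + split.
    * by move=> c; rewrite /delta4 F1 hu1 scale1r -(mulmxA c) ip mulmx1.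
    * move=> f; rewrite /delta4 /delta3 /= (app_homOf (linf1 f)) (mulmxA _ jL d3).
      by rewrite addrCA -mulmxDl dec' addrC F3.
  + move=> [ph e]; rewrite /delta3 /delta2 pairD /=; congr pair.
    * apply: homP => x; rewrite mulmxDr (app_homOf (linf1 _)) (app_homOf (linT1 _)).
      rewrite (app_homOf (linf2 ph e)) /app (islinD (H12r x)) (mulmxA _ jL d3) F1.
      rewrite mulmxDl -scalemxAl -(mulmxA (u *m ph) jL eta) je mulmx1 F2 mulmxBl -scalemxAl.
      have F4' : mul12 x (mul11 u e) = - mul12 e (mul11 u x).
        by apply/eqP; rewrite -addr_eq0 F4.
      rewrite F4' mulNmx.
      by apply/matrixP => i j; rewrite !mxE; ring.
    * rewrite mulmxDl F2 -(mulmxA _ (jL *m d3)) wd2 mulmx0 addr0.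
      rewrite (app_homOf (linf2 ph e)) /app wd2 mul0mx add0r F1 -scalemxAl je.
      by rewrite -scalemxAl mul1mx subrK.
  + move=> psi; rewrite /delta2 /delta1 /=; apply: homP => x.
    rewrite mulmxDr (app_homOf (linf2 _ _)) /app (app_homOf (linT1 _)).
    rewrite (app_homOf (linT0 _)) (app_homOf (linD1 _)) /app.
    rewrite mx11l (islinZ (H12l x)) -scalemxAl.
    rewrite -[in RHS](F3 x) -[in RHS](dec' (mul12 u x)).
    rewrite !mulmxDl -(mulmxA (mul12 u x *m eta) jL) (mulmxA (mul12 u x *m eta)).
    have E : forall y : 'M_1, y *m jL *m d3 *m psi = (jL *m d3 *m psi) 0 0 *: y.
      by move=> y; rewrite -!mulmxA (mulmxA jL) mx11C mx11l.
    rewrite E.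
    by apply/matrixP => i j; rewrite !mxE; ring.
  + move=> chi; rewrite /delta1; apply: homP => c.
    rewrite (app_homOf (linD1 _)) /app (app_homOf (linT0 chi)) F1 hu1 scale1r.
    by rewrite -(mulmxA c) ip mulmx1.
Qed.
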